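(* Suppose that for every $c\in\{1,\dots,K-1\}$, $$\bar p_c(\bm x,\bar Y)=\binom{K-1}{c}^{-1}\sum_{y\notin \bar Y}p(\bm x,y)\qquad(\bm x\in\mathcal X,\ \bar Y\in\overline{\mathcal Y}_c).$$ Let $\gamma\in[0,1]$ and let $\bm\alpha$ satisfy $\alpha_c\ge0$, $\sum_{c=1}^{K-1}\alpha_c=1$. Define the multi-complementary and unlabeled risk $R_{\mathrm{MCUL}}(\bm g)=\sum_{c=1}^{K-1}\alpha_c R^u_c(\bm g)$, where $$R^u_c(\bm g)=\mathbb E_{\bar p_c(\bm x,\bar Y)}\Big[(1-\gamma)\mathcal L(\bm g(\bm x))-\frac{K-1}{c}\sum_{y\in\bar Y}\ell(\bm g(\bm x),y)\Big]+\gamma\,\mathbb E_{p(\bm x)}\big[\mathcal L(\bm g(\bm x))\big].$$ Then for any loss $\ell$ and decision function $\bm g$ (with finite expectations), $R_{\mathrm{MCUL}}(\bm g)=R(\bm g)$.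
   Context: Let $K\ge 2$, $\mathcal X\subseteq\mathbb R^d$ the feature space and $\mathcal Y=\{1,\dots,K\}$ the label space. Let $p(\bm x,y)$ be a joint density on $\mathcal X\times\mathcal Y$ with marginal density $p(\bm x)$. For $c\in\{1,\dots,K-1\}$, $\overline{\mathcal Y}_c$ denotes the collection of all $c$-element subsets of $\{1,\dots,K\}$, and $\bar p_c(\bm x,\bar Y)$ is a density on $\mathcal X\times\overline{\mathcal Y}_c$. A decision function is a map $\bm g:\mathcal X\to\mathbb R^K$, a loss is a function $\ell:\mathbb R^K\times\mathcal Y\to[0,\infty)$, the classification risk is $R(\bm g)=\mathbb E_{p(\bm x,y)}[\ell(\bm g(\bm x),y)]$, and the cumulative loss is $\mathcal L(\bm g(\bm x))=\sum_{y=1}^K\ell(\bm g(\bm x),y)$. *)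

(* Defs.v *)
From HB Require Import structures.
From mathcomp Require Import all_boot all_order all_algebra.
Set Implicit Arguments. Unset Strict Implicit. Unset Printing Implicit Defensive.
Import Order.TTheory GRing.Theory Num.Theory.
Local Open Scope ring_scope.

(* Labels {1..K} are 'I_K; c-element label subsets are {set 'I_K} with #|Y| = c.
   Integration over the feature space X is an abstract functional [I], linear
   on a class [Int] of integrable functions (closed under + and scaling).
   Any Lebesgue integral w.r.t. the reference measure is such a functional. *)

Definition integral_functional (R : ringType) (X : Type)
  (Int : (X -> R) -> Prop) (I : (X -> R) -> R) : Prop :=
  (forall f g, Int f -> Int g ->
     Int (fun x => f x + g x) /\ I (fun x => f x + g x) = I f + I g) /\
  (forall (a : R) f, Int f ->
     Int (fun x => a * f x) /\ I (fun x => a * f x) = a * I f).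

Definition cumloss (R : ringType) (K : nat) (ell : 'rV[R]_K -> 'I_K -> R)
  (v : 'rV[R]_K) : R := \sum_(y : 'I_K) ell v y.

Definition marginal (R : ringType) (X : Type) (K : nat) (p : X -> 'I_K -> R)
  (x : X) : R := \sum_(y : 'I_K) p x y.

Definition E_joint (R : ringType) (X : Type) (K : nat) (I : (X -> R) -> R)
  (p : X -> 'I_K -> R) (F : X -> 'I_K -> R) : R :=
  I (fun x => \sum_(y : 'I_K) p x y * F x y).

Definition E_bar (R : ringType) (X : Type) (K : nat) (I : (X -> R) -> R)
  (c : nat) (pc : X -> {set 'I_K} -> R) (F : X -> {set 'I_K} -> R) : R :=
  I (fun x => \sum_(Y : {set 'I_K} | #|Y| == c) pc x Y * F x Y).

Definition risk (R : ringType) (X : Type) (K : nat) (I : (X -> R) -> R)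
  (p : X -> 'I_K -> R) (ell : 'rV[R]_K -> 'I_K -> R) (g : X -> 'rV[R]_K) : R :=
  E_joint I p (fun x y => ell (g x) y).

Definition ru_integrand (R : fieldType) (X : Type) (K : nat) (gamma : R) (c : nat)
  (ell : 'rV[R]_K -> 'I_K -> R) (g : X -> 'rV[R]_K) (x : X) (Y : {set 'I_K}) : R :=
  (1 - gamma) * cumloss ell (g x)
  - (K.-1)%:R / c%:R * \sum_(y in Y) ell (g x) y.

Definition risk_u (R : fieldType) (X : Type) (K : nat) (I : (X -> R) -> R)
  (p : X -> 'I_K -> R) (pbar : nat -> X -> {set 'I_K} -> R) (gamma : R) (c : nat)
  (ell : 'rV[R]_K -> 'I_K -> R) (g : X -> 'rV[R]_K) : R :=
  E_bar I c (pbar c) (ru_integrand gamma c ell g)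
  + gamma * I (fun x => marginal p x * cumloss ell (g x)).

Definition risk_MCUL (R : fieldType) (X : Type) (K : nat) (I : (X -> R) -> R)
  (p : X -> 'I_K -> R) (pbar : nat -> X -> {set 'I_K} -> R) (gamma : R)
  (alpha : nat -> R) (ell : 'rV[R]_K -> 'I_K -> R) (g : X -> 'rV[R]_K) : R :=
  \sum_(1 <= c < K) alpha c * risk_u I p pbar gamma c ell g.

(* Main.v *)
Require Import Defs.
From HB Require Import structures.
From mathcomp Require Import all_boot all_order all_algebra.
From mathcomp Require Import ring zify.
From Stdlib Require Import FunctionalExtensionality.
Import Order.TTheory GRing.Theory Num.Theory.
Local Open Scope ring_scope.
Lemma cnt1 K c (y : 'I_K) :
  #|[set Y : {set 'I_K} | (#|Y| == c) && (y \notin Y)]| = 'C(K.-1, c).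
Proof.
rewrite -[K in 'C(K.-1,_)]card_ord -(cardsC1 y) -cards_draws.
apply: eq_card => Y; rewrite !inE subsetC sub1set inE andbC.
by [].
Qed.

Lemma cnt2 K c (y y' : 'I_K) : (1 <= c)%N -> y != y' ->
  #|[set Y : {set 'I_K} | (#|Y| == c) && (y' \notin Y) && (y \in Y)]| = 'C(K.-2, c.-1).
Proof.
move=> c1 neq.
have K2 : (1 < K)%N.
  case: y y' neq => [[|a] ha] [[|b] hb] //= _;
  [exact: (leq_ltn_trans (ltn0Sn b) hb) | exact: (leq_ltn_trans (ltn0Sn a) ha)..].
set A := [set Y : {set 'I_K} | (#|Y| == c) && (y' \notin Y)].
have hA : #|A| = 'C(K.-1, c) by rewrite cnt1.
have hD : #|A :\: [set Y : {set 'I_K} | y \in Y]| = 'C(K.-2, c).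
  have -> : K.-2 = #|~: [set y; y']|.
    rewrite cardsCs setCK cards2 (negbTE neq) card_ord. by rewrite subn2.
  rewrite -cards_draws; apply: eq_card => Y; rewrite !inE subsetC subUset !sub1set !inE.
  by case: (#|Y| == c); case: (y \in Y); case: (y' \in Y).
have := cardsID [set Y : {set 'I_K} | y \in Y] A; rewrite hA hD.
have -> : A :&: [set Y : {set 'I_K} | y \in Y] = [set Y : {set 'I_K} | (#|Y| == c) && (y' \notin Y) && (y \in Y)].
  by apply/setP => Y; rewrite !inE.
have -> : K.-1 = (K.-2).+1 by case: (K) K2 => [|[|k]].
clearbody A. move: hD; case: (c) c1 => // c0 _ /= _. rewrite binS addnC. by move/eqP; rewrite eqn_add2l => /eqP.
Qed.

Lemma sum_cst (R : ringType) (T : finType) (P : pred T) (x : R) :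
  \sum_(Y | P Y) x = x *+ #|[set Y | P Y]|.
Proof. by rewrite -sumr_const; apply: eq_bigl => Y; rewrite inE. Qed.

Lemma L1 (R : ringType) K c (f : 'I_K -> R) :
  \sum_(Y : {set 'I_K} | #|Y| == c) \sum_(y | y \notin Y) f y
  = 'C(K.-1, c)%:R * \sum_y f y.
Proof.
under eq_bigr => Y _ do rewrite big_mkcond /=.
rewrite exchange_big /= mulr_sumr; apply: eq_bigr => y _.
rewrite -big_mkcondr sum_cst cnt1 mulr_natl //.
Qed.

Lemma L2 (R : comRingType) K c (f e : 'I_K -> R) : (1 <= c)%N ->
  \sum_(Y : {set 'I_K} | #|Y| == c) ((\sum_(y' | y' \notin Y) f y') * \sum_(y in Y) e y)
  = 'C(K.-2, c.-1)%:R * ((\sum_y f y) * (\sum_y e y) - \sum_y f y * e y).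
Proof.
move=> c1.
have step : forall Y : {set 'I_K}, (\sum_(y' | y' \notin Y) f y') * \sum_(y in Y) e y
   = \sum_y' \sum_y (if y' \notin Y then (if y \in Y then f y' * e y else 0) else 0).
  move=> Y; rewrite big_distrl /= big_mkcond /=; apply: eq_bigr => y' _.
  case: (y' \notin Y); last by rewrite big1.
  by rewrite big_distrr /= big_mkcond.
under eq_bigr => Y _ do rewrite step.
rewrite exchange_big /=.
under eq_bigr => y' _ do rewrite exchange_big /=.
rewrite big_distrl /= -sumrB mulr_sumr; apply: eq_bigr => y' _.
have -> : f y' * \sum_y e y - f y' * e y' = f y' * \sum_(i | i != y') e i.
  by rewrite (bigD1 y') //= mulrDr addrAC subrr add0r.
rewrite (bigD1 y') //=.
rewrite big1; last first.
  by move=> Y _; case: ifP => // /negbTE ->.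
rewrite add0r.
rewrite mulr_sumr mulr_sumr; apply: eq_bigr => y ney.
rewrite -!big_mkcondr sum_cst.
by rewrite cnt2 // mulr_natl.
Qed.

Lemma pointwise (R : realFieldType) (X : Type) (K : nat)
  (p : X -> 'I_K -> R) (pbar : nat -> X -> {set 'I_K} -> R)
  (gamma : R) (ell : 'rV[R]_K -> 'I_K -> R) (g : X -> 'rV[R]_K) c x :
  (1 <= c < K)%N ->
  (forall (Y : {set 'I_K}), #|Y| = c ->
     pbar c x Y = ('C(K.-1, c))%:R^-1 * \sum_(y | y \notin Y) p x y) ->
  \sum_(Y : {set 'I_K} | #|Y| == c) pbar c x Y * ru_integrand gamma c ell g x Y
  = \sum_(y : 'I_K) p x y * ell (g x) y + - gamma * (marginal p x * cumloss ell (g x)).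
Proof.
move=> /andP[c1 cK] hpb.
set N : R := ('C(K.-1, c))%:R.
set M : R := ('C(K.-2, c.-1))%:R.
set L := cumloss ell (g x).
transitivity (\sum_(Y : {set 'I_K} | #|Y| == c) (N^-1 * ((1 - gamma) * L) * (\sum_(y | y \notin Y) p x y)
   - N^-1 * ((K.-1)%:R / c%:R) * ((\sum_(y | y \notin Y) p x y) * \sum_(y in Y) ell (g x) y))).
  apply: eq_bigr => Y /eqP hY; rewrite hpb // /ru_integrand -/L; ring.
rewrite sumrB -!mulr_sumr L1 L2 // /marginal /L /cumloss.
have cpos : (0 < c)%N := c1.
have hN : N != 0 by rewrite pnatr_eq0 -lt0n bin_gt0; lia.
have hM : M != 0 by rewrite pnatr_eq0 -lt0n bin_gt0; lia.
have hc : (c%:R : R) != 0 by rewrite pnatr_eq0 -lt0n.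
have hrel : (K.-1)%:R * M = c%:R * N.
  rewrite /M /N -!natrM mul_bin_diag prednK //.
have -> : (K.-1)%:R = c%:R * N / M by rewrite -hrel mulfK.
rewrite -/N -/M. field; by rewrite hc -/N -/M hN hM.
Qed.

Theorem theorem2 (R : realFieldType) (X : Type) (K : nat)
  (Int : (X -> R) -> Prop) (I : (X -> R) -> R)
  (p : X -> 'I_K -> R) (pbar : nat -> X -> {set 'I_K} -> R)
  (gamma : R) (alpha : nat -> R)
  (ell : 'rV[R]_K -> 'I_K -> R) (g : X -> 'rV[R]_K) :
  (2 <= K)%N ->
  integral_functional Int I ->
  (* p is a joint density *)
  (forall x y, 0 <= p x y) ->
  Int (marginal p) -> I (marginal p) = 1 ->
  (* assumed generation of complementary labels *)
  (forall c, (1 <= c < K)%N -> forall x (Y : {set 'I_K}), #|Y| = c ->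
     pbar c x Y = ('C(K.-1, c))%:R^-1 * \sum_(y | y \notin Y) p x y) ->
  0 <= gamma <= 1 ->
  (forall c, (1 <= c < K)%N -> 0 <= alpha c) ->
  \sum_(1 <= c < K) alpha c = 1 ->
  (* ell is a loss *)
  (forall v y, 0 <= ell v y) ->
  (* finite expectations *)
  (forall c, (1 <= c < K)%N ->
     Int (fun x => \sum_(Y : {set 'I_K} | #|Y| == c)
                      pbar c x Y * ru_integrand gamma c ell g x Y)) ->
  Int (fun x => marginal p x * cumloss ell (g x)) ->
  Int (fun x => \sum_(y : 'I_K) p x y * ell (g x) y) ->
  risk_MCUL I p pbar gamma alpha ell g = risk I p ell g.
Proof.
move=> K2 [hadd hscal] _ _ _ hpb _ _ halpha _ _ hIL hIF.
rewrite /risk_MCUL /risk /E_joint.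
have hru : forall c, (1 <= c < K)%N -> risk_u I p pbar gamma c ell g
   = I (fun x => \sum_(y : 'I_K) p x y * ell (g x) y).
  move=> c hc; rewrite /risk_u /E_bar.
  have -> : (fun x => \sum_(Y : {set 'I_K} | #|Y| == c) pbar c x Y * ru_integrand gamma c ell g x Y)
     = (fun x => \sum_(y : 'I_K) p x y * ell (g x) y + - gamma * (marginal p x * cumloss ell (g x))).
    apply: functional_extensionality => x; apply: pointwise => // Y; exact: hpb.
  have [hs1 hs2] := hscal (- gamma) _ hIL.
  have [_ ->] := hadd _ _ hIF hs1.
  by rewrite hs2 mulNr addrNK.
rewrite (eq_big_nat _ _ (F2 := fun c => alpha c * I (fun x => \sum_(y : 'I_K) p x y * ell (g x) y))); last first.
  by move=> c hc; rewrite hru.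
by rewrite -mulr_suml halpha mul1r.
Qed.
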